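(* Let $q$ be a prime power, let $1\le k\le m$ be integers, and let $C\subseteq \mathbb{F}_{q^m}^k$ be a non-zero $\mathbb{F}_{q^m}$-linear code of dimension $1\le t\le k$ over $\mathbb{F}_{q^m}$. For any integer $1\le r\le t$ we have $$m_r(C)=\min\{\dim_{\mathbb{F}_{q^m}}(A) : A\in \mathcal{A}^G_q(k,m),\ \dim_{\mathbb{F}_{q^m}}(A\cap C)\ge r\}.$$
   Context: For $v\in\mathbb{F}_{q^m}^k$, $\mathrm{rk}(v):=\dim_{\mathbb{F}_q}\mathrm{Span}_{\mathbb{F}_q}\{v_1,\dots,v_k\}$, and for a subspace $C$, $\mathrm{maxrk}(C):=\max\{\mathrm{rk}(c):c\in C\}$. $\mathcal{A}^G_q(k,m)$ is the set of $\mathbb{F}_{q^m}$-subspaces $A\subseteq\mathbb{F}_{q^m}^k$ with $\dim_{\mathbb{F}_{q^m}}(A)=\mathrm{maxrk}(A)$. A subspace $V\subseteq\mathbb{F}_{q^m}^k$ is Frobenius-closed if $(v_1^q,\dots,v_k^q)\in V$ whenever $v\in V$; $\Lambda_q(k,m)$ is the set of such subspaces. The $r$-th generalized rank weight is $m_r(C):=\min\{\dim_{\mathbb{F}_{q^m}}(V): V\in\Lambda_q(k,m),\ \dim_{\mathbb{F}_{q^m}}(V\cap C)\ge r\}$. *)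

(* Defs.v *)
From HB Require Import structures.
From mathcomp Require Import all_boot all_order all_algebra all_field.
From mathcomp Require Import boolp.
Set Implicit Arguments. Unset Strict Implicit. Unset Printing Implicit Defensive.
Import GRing.Theory.
Local Open Scope ring_scope.

(* Setting: F = F_q is a finite field (q = #|F| is a prime power),
   L = F_{q^m} is a finite-dimensional field extension of F with m = \dim {:L}. *)

Section RankMetric.
Variables (F : finFieldType) (L : fieldExtType F) (k : nat).

(* minimum of the naturals i <= k satisfying P (default k if none) *)
Definition min_upto (P : nat -> Prop) : nat :=
  \big[minn/k]_(i < k.+1 | `[< P i >]) i.

Definition rk (v : 'rV[L]_k) : nat :=
  \dim (<<[seq v ord0 i | i <- enum 'I_k]>>%VS : {vspace L}).

Definition maxrk (C : {vspace 'rV[L]_k}) : nat :=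
  \max_(i < k.+1 | `[< exists2 c, c \in C & rk c = i >]) i.

Definition in_AG (A : {vspace 'rV[L]_k}) : Prop := \dim A = maxrk A.

Definition frob (v : 'rV[L]_k) : 'rV[L]_k := map_mx (fun x => x ^+ #|F|) v.

Definition frob_closed (V : {vspace 'rV[L]_k}) : Prop :=
  forall v, v \in V -> frob v \in V.

Definition gen_rank_weight (C : {vspace 'rV[L]_k}) (r : nat) : nat :=
  min_upto (fun i => exists V : {vspace 'rV[L]_k},
     [/\ frob_closed V, (r <= \dim (V :&: C))%N & \dim V = i]).

End RankMetric.

(* Main.v *)
Require Import Defs.
From HB Require Import structures.
From mathcomp Require Import all_boot all_order all_algebra all_field.
From mathcomp Require Import boolp.
From mathcomp Require Import fingroup pgroup abelian.
Set Implicit Arguments. Unset Strict Implicit. Unset Printing Implicit Defensive.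
Import GRing.Theory.
Local Open Scope ring_scope.

Section Frob.
Variables (F : finFieldType) (L : fieldExtType F).
Local Notation q := #|F|.

Lemma q_gt1 : (1 < q)%N. Proof. exact: finNzRing_gt1. Qed.

Lemma qnatL : [pchar L].-nat q.
Proof.
have [p pr_p chp] := finPcharP F.
have /abelem_pgroup := fin_ring_pchar_abelem chp.
rewrite /pgroup cardsT => pq.
have e1 : [pchar L] =i (p : nat_pred).
  move=> n; rewrite (pchar_lalg L) ; exact: (pcharf_eq chp).
by rewrite (eq_pnat _ e1).
Qed.

Lemma qpowD (i : nat) (x y : L) : (x + y) ^+ (q ^ i) = x ^+ (q ^ i) + y ^+ (q ^ i).
Proof. by apply: exprDn_pchar; rewrite pnatX qnatL. Qed.

Lemma qpowF (i : nat) (a : F) : a ^+ (q ^ i) = a.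
Proof.
elim: i => [|i IH]; first by rewrite expr1.
by rewrite expnSr exprM IH expf_card.
Qed.

Lemma qpowA (i : nat) (a : F) : (a%:A : L) ^+ (q ^ i) = a%:A.
Proof. by rewrite exprZn expr1n qpowF. Qed.

Lemma qpowZ (i : nat) (a : F) (x : L) : (a *: x) ^+ (q ^ i) = a *: x ^+ (q ^ i).
Proof. by rewrite exprZn qpowF. Qed.

Lemma qpow_sum (i : nat) (I : finType) (a : I -> F) (x : I -> L) :
  (\sum_j a j *: x j) ^+ (q ^ i) = \sum_j a j *: x j ^+ (q ^ i).
Proof.
rewrite (@big_morph _ _ (fun y : L => y ^+ (q ^ i)) 0 +%R 0 +%R); last 2 first.
- by move=> y z; rewrite qpowD.
- by rewrite expr0n expn_eq0 -[q == 0%N]negbK -lt0n (ltnW q_gt1).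
by apply: eq_bigr => j _; rewrite qpowZ.
Qed.

Variable k : nat.

Definition cF (v : 'rV[L]_k) (x : 'rV[F]_k) : L := \sum_i x ord0 i *: v ord0 i.

Lemma cF_lin v : linear (cF v).
Proof.
move=> a x y; rewrite /cF scaler_sumr -big_split /=; apply: eq_bigr => i _.
by rewrite !mxE scalerDl scalerA.
Qed.

HB.instance Definition _ v := GRing.isLinear.Build F 'rV[F]_k L _ (cF v) (cF_lin v).

Definition Kf v : {vspace 'rV[F]_k} := lker (linfun (cF v)).

Lemma memK v x : (x \in Kf v) = (cF v x == 0).
Proof. by rewrite memv_ker lfunE. Qed.

Lemma cFE v x : linfun (cF v) x = \sum_i x ord0 i *: v ord0 i.
Proof. by rewrite lfunE. Qed.

Definition U (v : 'rV[L]_k) : {vspace L} := <<[seq v ord0 i | i <- enum 'I_k]>>%VS.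
Definition cs (v : 'rV[L]_k) : k.-tuple L := [tuple v ord0 i | i < k].
Lemma Ucs v : <<cs v>>%VS = U v.
Proof. by rewrite /cs /U /= -val_ord_tuple. Qed.

Lemma cs_nth v (i : 'I_k) : (cs v)`_i = v ord0 i.
Proof. by rewrite -(tnth_nth 0) tnth_mktuple. Qed.

Lemma rkU (v : 'rV[L]_k) : rk v = \dim (U v). Proof. by []. Qed.

Lemma v_in_U (v : 'rV[L]_k) i : v ord0 i \in U v.
Proof. by apply: memv_span; apply: map_f; rewrite mem_enum. Qed.

Lemma limg_cF v : limg (linfun (cF v)) = U v.
Proof.
apply/eqP; rewrite eqEsubv; apply/andP; split.
  apply/subvP => y /memv_imgP [x _ ->]; rewrite lfunE /= /cF.
  by apply: rpred_sum => i _; apply: rpredZ; apply: v_in_U.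
apply/span_subvP => y /mapP [i _ ->].
have -> : v ord0 i = linfun (cF v) (delta_mx ord0 i).
  rewrite lfunE /= /cF (bigD1 i) //= big1 ?addr0; first by rewrite mxE !eqxx scale1r.
  by move=> j ji; rewrite mxE (negbTE ji) andbF scale0r.
exact: memv_img (memvf _).
Qed.

Lemma dimK (v : 'rV[L]_k) : (\dim (Kf v) + rk v)%N = k.
Proof.
have := limg_ker_dim (linfun (cF v)) fullv.
by rewrite capfv limg_cF dimvf /dim /= mul1n.
Qed.

Lemma cardK (v : 'rV[L]_k) : #|Kf v| = (q ^ (k - rk v))%N.
Proof.
rewrite card_vspace; congr (_ ^ _)%N.
have H := dimK v; move: H; move: (\dim (Kf v)) (rk v) => a b.
by move=> H; apply/eqP; rewrite -(eqn_add2r b) subnK -H ?leq_addl.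
Qed.


Lemma cF_comb (v w : 'rV[L]_k) (lam : L) x : cF (v + lam *: w) x = cF v x + lam * cF w x.
Proof.
rewrite /cF mulr_sumr -big_split /=; apply: eq_bigr => i _.
by rewrite !mxE scalerDr scalerAr.
Qed.

Lemma cardL : #|finvect_type L| = (q ^ \dim {:L})%N.
Proof. by rewrite -(@card_vspacef F (finvect_type L) (Vector.class L)) card_vspace. Qed.

Lemma maxrk_sub (A : {vspace 'rV[L]_k}) v w :
  (k <= \dim {:L})%N -> v \in A -> w \in A ->
  (forall u, u \in A -> rk u <= rk v)%N -> {subset Kf v <= Kf w}.
Proof.
move=> kL vA wA vmax x xKv; apply/negPn/negP => xKw.
pose K0 := [set y | (y \in Kf v) && (y \in Kf w)].
have K0E y : (y \in K0) = (y \in Kf v) && (y \in Kf w) by rewrite inE.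
have K0lt : (#|K0| < #|Kf v|)%N.
  rewrite -[#|Kf v|]cardsE; apply: proper_card; apply/properP; split.
    by apply/subsetP => y; rewrite K0E inE => /andP[].
  by exists x; rewrite ?K0E ?inE ?xKv // negb_and xKw orbT.
have ex : forall lam : L, exists y, (y \in Kf (v + lam *: w)) && (y \notin K0).
  move=> lam.
  suff: ~~ [forall y, (y \in Kf (v + lam *: w)) ==> (y \in K0)].
    by move/forallPn => [y]; rewrite negb_imply => H; exists y.
  apply/negP => /forallP H.
  have h1 : (#|Kf (v + lam *: w)| <= #|K0|)%N.
    rewrite -cardsE; apply: subset_leq_card; apply/subsetP => y.
    by rewrite inE; exact: (implyP (H y)).
  have h2 : (#|Kf v| <= #|Kf (v + lam *: w)|)%N.
    rewrite !cardK leq_exp2l ?q_gt1 // leq_sub2l // vmax //.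
    by rewrite rpredD // rpredZ.
  by move: (leq_ltn_trans (leq_trans h2 h1) K0lt); rewrite ltnn.
pose s (lam : finvect_type L) := xchoose (ex lam).
have sP lam : (s lam \in Kf (v + lam *: w)) && (s lam \notin K0) := xchooseP (ex lam).
have s_inj : injective s.
  move=> l1 l2 e; have /andP[h1 n1] := sP l1; have /andP[h2 _] := sP l2.
  rewrite e in h1 n1; move: h1 h2 n1; set y := s l2.
  rewrite !memK !cF_comb => /eqP h1 /eqP h2 n1.
  have E : l1 * cF w y = l2 * cF w y by apply: (addrI (cF v y)); rewrite h1 h2.
  have [c0|cn0] := eqVneq (cF w y) 0.
    move: h2; rewrite c0 mulr0 addr0 => /eqP h2.
    by move: n1; rewrite K0E !memK h2 c0 eqxx.
  exact: (mulIf cn0).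
have s0 lam : s lam != 0.
  by move: (sP lam) => /andP[_]; apply: contra => /eqP ->; rewrite K0E !mem0v.
have : (#|[set s l | l : finvect_type L]| <= #|[set~ (0%R : 'rV[F]_k)]|)%N.
  by apply: subset_leq_card; apply/subsetP => y /imsetP [l _ ->]; rewrite !inE s0.
rewrite card_imset // cardsC1 card_mx mul1n cardT.
rewrite -cardT cardL => H.
have H2 : (q ^ k <= q ^ \dim {:L})%N by rewrite leq_exp2l ?q_gt1.
have H3 : (0 < q ^ k)%N by rewrite expn_gt0 (ltnW q_gt1).
move: (leq_trans H2 H); rewrite -(prednK H3) ltnn.
by [].
Qed.


Definition gvec (v : 'rV[L]_k) (j : 'I_(rk v)) : 'rV[L]_k :=
  \row_i ((coord (vbasis (U v)) j (v ord0 i))%:A : L).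

Arguments gvec : clear implicits.

Definition G (v : 'rV[L]_k) : {vspace 'rV[L]_k} :=
  <<[seq gvec v j | j <- enum 'I_(rk v)]>>%VS.

Lemma dimG (v : 'rV[L]_k) : (\dim (G v) <= rk v)%N.
Proof. by apply: leq_trans (dim_span _) _; rewrite size_map size_enum_ord. Qed.

Lemma cF_delta (v : 'rV[L]_k) i : cF v (delta_mx ord0 i) = v ord0 i.
Proof.
rewrite /cF (bigD1 i) //= big1 ?addr0; first by rewrite mxE !eqxx scale1r.
by move=> j ji; rewrite mxE (negbTE ji) andbF scale0r.
Qed.

Lemma cF_row (v : 'rV[L]_k) (a : 'I_k -> F) : cF v (\row_i a i) = \sum_i a i *: v ord0 i.
Proof. by rewrite /cF; apply: eq_bigr => i _; rewrite mxE. Qed.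

Lemma G_sub (v w : 'rV[L]_k) : {subset Kf v <= Kf w} -> w \in G v.
Proof.
move=> sub.
pose c (y : L) (i : 'I_k) := coord (cs v) i y.
pose psi (j : 'I_(rk v)) := \sum_i c (vbasis (U v))`_j i *: w ord0 i.
have -> : w = \sum_j psi j *: gvec v j.
  apply/rowP => i0; rewrite summxE.
  transitivity (\sum_i c (v ord0 i0) i *: w ord0 i).
    pose x := \row_i c (v ord0 i0) i - delta_mx ord0 i0.
    have : x \in Kf v.
      have vU : v ord0 i0 \in <<cs v>>%VS by rewrite Ucs v_in_U.
      have e := coord_span vU.
      have e' : v ord0 i0 = \sum_i c (v ord0 i0) i *: v ord0 i.
        by rewrite {1}e; apply: eq_bigr => i _; rewrite cs_nth.
      by rewrite memK linearB /= cF_delta cF_row -e' subrr.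
    move/sub; rewrite memK linearB /= cF_delta cF_row subr_eq0.
    by move/eqP ->.
  under [RHS]eq_bigr => j _ do rewrite !mxE mulrC mulr_algl scaler_sumr.
  rewrite exchange_big /=; apply: eq_bigr => i _.
  under eq_bigr => j _ do rewrite scalerA.
  rewrite -scaler_suml; congr (_ *: _).
  rewrite {1}(coord_vbasis (v_in_U v i0)) /c linear_sum; apply: eq_bigr => j _.
  by rewrite linearZ.
apply: rpred_sum => j _; apply: rpredZ; apply: memv_span; apply: map_f.
by rewrite mem_enum.
Qed.


Lemma powq_sum (n : nat) (y : 'I_n -> L) : (\sum_i y i) ^+ q = \sum_i (y i) ^+ q.
Proof.
rewrite (@big_morph _ _ (fun y : L => y ^+ q) 0 +%R 0 +%R) //.
  by move=> a b; have := qpowD 1 a b; rewrite expn1.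
by rewrite expr0n (gtn_eqF (ltnW q_gt1)).
Qed.

Lemma frob_sum (n : nat) (a : 'I_n -> L) (X : 'I_n -> 'rV[L]_k) :
  frob (\sum_i a i *: X i) = \sum_i (a i) ^+ q *: frob (X i).
Proof.
apply/rowP => j; rewrite /frob mxE !summxE powq_sum; apply: eq_bigr => i _.
by rewrite !mxE exprMn.
Qed.

Lemma frob_gvec (v : 'rV[L]_k) j : frob (gvec v j) = gvec v j.
Proof. by apply/rowP => i; rewrite /frob !mxE; have := qpowA 1 (coord (vbasis (U v)) j (v ord0 i)); rewrite expn1. Qed.

Lemma frob_closedG (v : 'rV[L]_k) : frob_closed (G v).
Proof.
move=> g; rewrite /G.
set X := [seq gvec v j | j <- enum 'I_(rk v)].
have -> : <<X>>%VS = <<in_tuple X>>%VS by [].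
move/coord_span => ->; rewrite frob_sum.
apply: rpred_sum => i _; apply: rpredZ.
have Xi : (in_tuple X)`_i \in X by apply: mem_nth.
have [j _ ej] := mapP Xi; rewrite ej frob_gvec -ej.
exact: memv_span.
Qed.


Lemma frob_iter (V : {vspace 'rV[L]_k}) w i :
  frob_closed V -> w \in V -> map_mx (fun x => x ^+ (q ^ i)) w \in V.
Proof.
move=> fV wV; elim: i => [|i IH].
  by have -> : map_mx (fun x => x ^+ (q ^ 0)) w = w by apply/rowP => j; rewrite mxE expn0 expr1.
have -> : map_mx (fun x => x ^+ (q ^ i.+1)) w = frob (map_mx (fun x => x ^+ (q ^ i)) w).
  by apply/rowP => j; rewrite /frob !mxE expnSr exprM.
exact: fV.
Qed.

Lemma rk_le_frob (V : {vspace 'rV[L]_k}) w :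
  frob_closed V -> w \in V -> (rk w <= \dim V)%N.
Proof.
move=> fV wV; set d := \dim V.
pose X : (d.+1).-tuple 'rV[L]_k := [tuple map_mx (fun x => x ^+ (q ^ i)) w | i < d.+1].
have XE (i : 'I_d.+1) : X`_i = map_mx (fun x => x ^+ (q ^ i)) w.
  by rewrite -(tnth_nth 0) tnth_mktuple.
have nfree : ~~ free X.
  apply/negP => fX.
  have sXV : (<<X>> <= V)%VS.
    apply/span_subvP => y /(nthP 0) [i]; rewrite size_tuple => ilt <-.
    by have := XE (Ordinal ilt) => /= ->; apply: frob_iter.
  by move: (dimvS sXV); rewrite (eqP fX) size_tuple ltnn.
have [c [cX [i0 ci0]]] : exists c : 'I_d.+1 -> L,
    \sum_i c i *: X`_i = 0 /\ exists i0, c i0 != 0.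
  apply: contrapT => H; move/negP: nfree; apply; apply/freeP => c cX i.
  apply: contrapT => ci; apply: H; exists c; split => //; exists i; exact/eqP.
pose P : {poly L} := \sum_(i < d.+1) c i *: 'X^(q ^ i).
have coefP n : P`_n = \sum_(i < d.+1) c i * (n == q ^ i)%N%:R.
  by rewrite coef_sum; apply: eq_bigr => i _; rewrite coefZ coefXn.
have Pn0 : P != 0.
  apply/negP => /eqP P0; move: (coefP (q ^ i0)%N); rewrite P0 coef0.
  rewrite (bigD1 i0) //= eqxx mulr1 big1 ?addr0.
    by move=> e; move: ci0; rewrite -e eqxx.
  move=> j ji0; rewrite eqn_exp2l ?q_gt1 //.
  have -> : (i0 == j :> nat) = false by apply/negP => /eqP /val_inj e; move: ji0; rewrite e eqxx.
  by rewrite mulr0.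
have sizeP : (size P <= (q ^ d).+1)%N.
  apply/leq_sizeP => n hn; rewrite coefP big1 // => i _.
  have -> : (n == q ^ i)%N = false; last by rewrite mulr0.
  apply/negP => /eqP e.
  have h : (q ^ i <= q ^ d)%N by rewrite leq_exp2l ?q_gt1 // -ltnS.
  by move: (leq_ltn_trans h hn); rewrite e ltnn.
have hornP y : P.[y] = \sum_(i < d.+1) c i * y ^+ (q ^ i).
  by rewrite horner_sum; apply: eq_bigr => i _; rewrite hornerZ hornerXn.
have rootw j : P.[w ord0 j] = 0.
  have e := congr1 (fun M : 'rV[L]_k => M ord0 j) cX; rewrite /= summxE mxE in e.
  rewrite hornP -[RHS]e.
  by apply: eq_bigr => i _; rewrite mxE XE mxE.
have rootU y : y \in U w -> P.[y] = 0.
  rewrite -Ucs => /coord_span ->.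
  rewrite hornP.
  under eq_bigr => i _ do rewrite qpow_sum mulr_sumr.
  rewrite exchange_big /= big1 // => j _.
  under eq_bigr => i _ do rewrite -scalerAr.
  rewrite -scaler_sumr -hornP.
  by rewrite cs_nth rootw scaler0.
pose rs := enum [pred y : finvect_type L | y \in U w].
have allr : all (root P) rs.
  by apply/allP => y; rewrite /rs (@mem_enum (finvect_type L)) inE => yU; apply/eqP/rootU.
have H := max_poly_roots Pn0 allr (enum_uniq _).
have crs : size rs = (q ^ rk w)%N.
  rewrite -cardE.
  by rewrite -(@card_vspace F (finvect_type L) (Vector.class L)).
rewrite crs in H; have H2 := leq_trans H sizeP.
by rewrite -(leq_exp2l _ _ q_gt1).
Qed.


Lemma rk_le_k (v : 'rV[L]_k) : (rk v < k.+1)%N.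
Proof. by rewrite ltnS; apply: leq_trans (dim_span _) _; rewrite size_map size_enum_ord. Qed.

Lemma rk_le_maxrk (A : {vspace 'rV[L]_k}) u : u \in A -> (rk u <= maxrk A)%N.
Proof.
move=> uA; rewrite /maxrk.
apply: (leq_bigmax_cond (Ordinal (rk_le_k u)) (F := fun i : 'I_k.+1 => (i : nat))).
by apply/asboolP; exists u.
Qed.

Lemma maxrk_attained (A : {vspace 'rV[L]_k}) : exists2 v, v \in A & rk v = maxrk A.
Proof.
pose i0 := Ordinal (rk_le_k 0).
have P0 : `[< exists2 c, c \in A & rk c = i0 >] by apply/asboolP; exists 0; rewrite ?mem0v.
rewrite /maxrk (bigmax_eq_arg i0) //.
by case: arg_maxnP => // i /asboolP [c cA ec] _; exists c.
Qed.

Lemma frob_sup (A : {vspace 'rV[L]_k}) : (k <= \dim {:L})%N ->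
  exists W : {vspace 'rV[L]_k}, [/\ frob_closed W, (A <= W)%VS & (\dim W <= maxrk A)%N].
Proof.
move=> kL; have [v vA ev] := maxrk_attained A.
exists (G v); split.
- exact: frob_closedG.
- apply/subvP => w wA; apply: G_sub; apply: (maxrk_sub kL vA wA).
  by move=> u uA; rewrite ev; apply: rk_le_maxrk.
- by rewrite -ev; apply: dimG.
Qed.

Lemma dim_le_maxrk (A : {vspace 'rV[L]_k}) : (k <= \dim {:L})%N -> (\dim A <= maxrk A)%N.
Proof.
move=> kL; have [W [_ AW dW]] := frob_sup A kL.
exact: leq_trans (dimvS AW) dW.
Qed.

Lemma frob_AG (V : {vspace 'rV[L]_k}) : (k <= \dim {:L})%N -> frob_closed V -> in_AG V.
Proof.
move=> kL fV; apply/eqP; rewrite eqn_leq dim_le_maxrk //=.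
have [v vV <-] := maxrk_attained V.
exact: rk_le_frob.
Qed.

End Frob.

Lemma bigmin_le (I : eqType) (r : seq I) (P : pred I) (f : I -> nat) (d : nat) j :
  j \in r -> P j -> (\big[minn/d]_(i <- r | P i) f i <= f j)%N.
Proof.
elim: r => // a r IH; rewrite inE big_cons => /orP [/eqP <- Pa|jr Pj].
  by rewrite Pa geq_minl.
by case: ifP => _; [rewrite geq_min IH ?orbT | apply: IH].
Qed.

Lemma min_uptoP (k : nat) (P : nat -> Prop) c :
  (c <= min_upto k P)%N <-> (c <= k)%N /\ (forall i, (i <= k)%N -> P i -> (c <= i)%N).
Proof.
rewrite /min_upto; split.
  move=> h; split.
    apply: leq_trans h _; apply: (big_ind (fun x => x <= k)%N) => //.
      by move=> x y hx hy; rewrite geq_min hx.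
    by move=> i _; rewrite -ltnS.
  move=> i ik Pi; apply: leq_trans h _.
  apply: (@bigmin_le _ _ _ (fun i : 'I_k.+1 => (i : nat)) k (Ordinal (ik : (i < k.+1)%N))).
    by rewrite mem_index_enum.
  by apply/asboolP.
move=> [ck h]; apply: (big_ind (fun x => c <= x)%N) => //.
  by move=> x y hx hy; rewrite leq_min hx.
by move=> i /asboolP; apply: h; rewrite -ltnS.
Qed.

Lemma min_upto_le (k : nat) (P1 P2 : nat -> Prop) :
  (forall j, (j <= k)%N -> P2 j -> exists2 i, (i <= j)%N & P1 i) ->
  (min_upto k P1 <= min_upto k P2)%N.
Proof.
move=> h; apply/min_uptoP; split.
  by have [] := (proj1 (min_uptoP k P1 (min_upto k P1))) (leqnn _).
move=> j jk P2j; have [i ij P1i] := h j jk P2j.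
have [_ h1] := (proj1 (min_uptoP k P1 (min_upto k P1))) (leqnn _).
exact: leq_trans (h1 i (leq_trans ij jk) P1i) ij.
Qed.

Unset Implicit Arguments.

Theorem corollary3p13 (F : finFieldType) (L : fieldExtType F) (k t r : nat)
  (C : {vspace 'rV[L]_k}) :
  (1 <= k <= \dim {:L})%N ->
  \dim C = t -> (1 <= t <= k)%N ->
  (1 <= r <= t)%N ->
  gen_rank_weight C r =
  min_upto k (fun i => exists A : {vspace 'rV[L]_k},
     [/\ in_AG A, (r <= \dim (A :&: C))%N & \dim A = i]).
Proof.
move=> /andP[_ kL] _ _ _; rewrite /gen_rank_weight.
apply/eqP; rewrite eqn_leq; apply/andP; split; apply: min_upto_le.
- move=> j jk [A [AG rA dA]].
  have [W [fW AW dW]] := frob_sup A kL.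
  exists (\dim W); first by rewrite -dA; move: dW; rewrite -AG.
  exists W; split => //.
  by apply: leq_trans rA _; apply: dimvS; apply: capvS.
- move=> j jk [V [fV rV dV]].
  by exists j => //; exists V; split => //; apply: frob_AG.
Qed.
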